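(* There is an absolute constant $c>0$ such that for any two disjoint finite point sets $P,S$ in the plane with $P\cup S$ generic, every edge $e$ of $T_P$ crosses at most $c$ edges of $T_S$ whose length is at least the length of $e$.
   Context: A finite planar point set is in general position if no three of its points are collinear; it is generic if it is in general position and every subset has a unique Euclidean minimum spanning tree (MST). For a generic set $X$, $T_X$ denotes its MST, with edges drawn as straight segments. *)

(* Defs.v *)
From Stdlib Require Import Reals List.
Import ListNotations.
Open Scope R_scope.

Definition point : Type := (R * R)%type.
Definition edge : Type := (point * point)%type.

Definition dist (p q : point) : R :=
  sqrt ((fst p - fst q)^2 + (snd p - snd q)^2).

Definition elen (e : edge) : R := dist (fst e) (snd e).

Definition orient (p q r : point) : R :=
  (fst q - fst p) * (snd r - snd p) - (snd q - snd p) * (fst r - fst p).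

Definition general_position (X : list point) : Prop :=
  forall p q r, In p X -> In q X -> In r X ->
    p <> q -> q <> r -> p <> r -> orient p q r <> 0.

Definition adj (E : list edge) (p q : point) : Prop :=
  In (p, q) E \/ In (q, p) E.

Inductive reach (E : list edge) : point -> point -> Prop :=
| reach_refl : forall p, reach E p p
| reach_step : forall p q r, reach E p q -> adj E q r -> reach E p r.

(* E is a spanning tree of the vertex set X: edges join distinct points of X,
   the graph is connected on X, and it is acyclic (no edge lies on a cycle:
   deleting any edge disconnects its endpoints). *)
Definition spanning_tree (X : list point) (E : list edge) : Prop :=
  (forall e, In e E -> In (fst e) X /\ In (snd e) X /\ fst e <> snd e) /\
  (forall p q, In p X -> In q X -> reach E p q) /\
  (forall E1 e E2, E = E1 ++ e :: E2 -> ~ reach (E1 ++ E2) (fst e) (snd e)).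

Definition weight (E : list edge) : R :=
  fold_right (fun e acc => elen e + acc) 0 E.

Definition is_MST (X : list point) (T : list edge) : Prop :=
  spanning_tree X T /\ forall T', spanning_tree X T' -> weight T <= weight T'.

Definition same_edges (E1 E2 : list edge) : Prop :=
  forall p q, adj E1 p q <-> adj E2 p q.

Definition generic (X : list point) : Prop :=
  general_position X /\
  forall Y, NoDup Y -> incl Y X ->
    forall T1 T2, is_MST Y T1 -> is_MST Y T2 -> same_edges T1 T2.

Definition crosses (e f : edge) : Prop :=
  exists s t, 0 <= s <= 1 /\ 0 <= t <= 1 /\
    fst (fst e) + s * (fst (snd e) - fst (fst e))
      = fst (fst f) + t * (fst (snd f) - fst (fst f)) /\
    snd (fst e) + s * (snd (snd e) - snd (fst e))
      = snd (fst f) + t * (snd (snd f) - snd (fst f)).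

(* Main.v *)
Require Import Defs.
From Stdlib Require Import Reals List Lra Lia ZArith Classical ClassicalEpsilon.
Import ListNotations.
Open Scope R_scope.

Lemma adj_sym E p q : adj E p q -> adj E q p.
Proof. unfold adj; tauto. Qed.

Lemma reach_trans E p q r : reach E p q -> reach E q r -> reach E p r.
Proof. intros H1 H2; induction H2; [assumption| eapply reach_step; [apply IHreach; exact H1|exact H]]. Qed.

Lemma reach_single E p q : adj E p q -> reach E p q.
Proof. intros H; eapply reach_step; [apply reach_refl|exact H]. Qed.

Lemma reach_sym E p q : reach E p q -> reach E q p.
Proof.
  intros H; induction H; [apply reach_refl|].
  eapply reach_trans; [apply reach_single, adj_sym; eassumption| assumption].
Qed.

Lemma reach_mono E E' p q : (forall x y, adj E x y -> adj E' x y) -> reach E p q -> reach E' p q.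
Proof.
  intros Hm H; induction H; [apply reach_refl| eapply reach_step; eauto].
Qed.

Definition edges_ok (X : list point) (E : list edge) :=
  forall e, In e E -> In (fst e) X /\ In (snd e) X /\ fst e <> snd e.
Definition connected (X : list point) (E : list edge) :=
  forall p q, In p X -> In q X -> reach E p q.

Lemma weight_app E1 E2 : weight (E1 ++ E2) = weight E1 + weight E2.
Proof. induction E1; simpl; [lra| rewrite IHE1; lra]. Qed.

Lemma elen_nonneg e : 0 <= elen e.
Proof. unfold elen, Defs.dist; apply sqrt_pos. Qed.

Lemma adj_app_split E1 e E2 x y : adj (E1 ++ e :: E2) x y ->
  adj (E1 ++ E2) x y \/ e = (x, y) \/ e = (y, x).
Proof.
  unfold adj; intros [H|H]; apply in_app_or in H; destruct H as [H|[H|H]];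
  auto using in_or_app.
Qed.

Lemma adj_app_incl E1 e E2 x y : adj (E1 ++ E2) x y -> adj (E1 ++ e :: E2) x y.
Proof.
  unfold adj; intros [H|H]; apply in_app_or in H; [left|right];
  destruct H; apply in_or_app; simpl; auto.
Qed.

Lemma remove_cycle_edge E1 e E2 : reach (E1++E2) (fst e) (snd e) ->
  forall p q, reach (E1 ++ e :: E2) p q -> reach (E1 ++ E2) p q.
Proof.
  intros Hc p q H; induction H; [apply reach_refl|].
  destruct (adj_app_split _ _ _ _ _ H0) as [Ha|[Ha|Ha]].
  - eapply reach_step; eauto.
  - subst e; simpl in Hc; eapply reach_trans; eauto.
  - subst e; simpl in Hc; eapply reach_trans; eauto using reach_sym.
Qed.

Lemma subtree_exists X : forall n E, (length E <= n)%nat -> edges_ok X E -> connected X E ->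
  exists T, spanning_tree X T /\ weight T <= weight E.
Proof.
  induction n; intros E Hl Hok Hc;
  (destruct (classic (forall E1 e E2, E = E1 ++ e :: E2 -> ~ reach (E1++E2) (fst e) (snd e))) as [Hac|Hn];
  [exists E; split; [split; [exact Hok| split; assumption]| lra]|]);
  apply not_all_ex_not in Hn; destruct Hn as [E1 Hn];
  apply not_all_ex_not in Hn; destruct Hn as [e Hn];
  apply not_all_ex_not in Hn; destruct Hn as [E2 Hn];
  apply imply_to_and in Hn; destruct Hn as [HE Hr]; apply NNPP in Hr; subst E.
  - rewrite length_app in Hl; simpl in Hl; lia.
  - destruct (IHn (E1 ++ E2)) as [T [HT Hw]].
    + rewrite length_app in *; simpl in Hl; lia.
    + intros f Hf; apply Hok; apply in_app_or in Hf; apply in_or_app; simpl; tauto.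
    + intros p q Hp Hq; apply (remove_cycle_edge E1 e E2); auto.
    + exists T; split; auto. rewrite !weight_app in *; simpl. pose proof (elen_nonneg e); lra.
Qed.

Lemma split_reach E1 f E2 p : reach (E1 ++ f :: E2) (fst f) p ->
  reach (E1++E2) (fst f) p \/ reach (E1++E2) (snd f) p.
Proof.
  intros H; remember (fst f) as a0 eqn:Ea; induction H.
  - left; apply reach_refl.
  - destruct (adj_app_split _ _ _ _ _ H0) as [Ha|[Ha|Ha]].
    + destruct IHreach; auto; [left|right]; eapply reach_step; eauto.
    + subst f; right; apply reach_refl.
    + subst f; simpl in *; subst; left; apply reach_refl.
Qed.

Lemma mst_cut S TS E1 f E2 : is_MST S TS -> TS = E1 ++ f :: E2 ->
  forall x y, In x S -> In y S -> reach (E1++E2) (fst f) x -> reach (E1++E2) (snd f) y ->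
  elen f <= Defs.dist x y.
Proof.
  intros [[Hok [Hcon Hac]] Hmin] HTS x y Hx Hy Hax Hby.
  destruct (Rle_or_lt (elen f) (Defs.dist x y)) as [H|H]; [exact H|exfalso].
  assert (Hfin : In f TS) by (subst; apply in_or_app; simpl; auto).
  destruct (Hok f Hfin) as [Ha [Hb Hab]].
  destruct (classic (x = y)) as [Exy|Nxy].
  { subst y. apply (Hac E1 f E2 HTS). eapply reach_trans; [exact Hax| apply reach_sym; exact Hby]. }
  set (T' := (E1 ++ E2) ++ [(x,y)]).
  assert (Hmono : forall u v, adj (E1++E2) u v -> adj T' u v).
  { unfold adj, T'; intros u v [Hu|Hu]; [left|right]; apply in_or_app; auto. }
  assert (Hxy : adj T' x y) by (left; unfold T'; apply in_or_app; simpl; auto).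
  assert (Hall : forall p, In p S -> reach T' p (fst f)).
  { intros p Hp. destruct (split_reach E1 f E2 p) as [Hp1|Hp1].
    - rewrite <- HTS; apply Hcon; auto.
    - apply reach_sym; eapply reach_mono; eauto.
    - eapply reach_trans; [apply reach_sym; eapply reach_mono; eauto|].
      eapply reach_trans; [eapply reach_mono; [exact Hmono| exact Hby]|].
      eapply reach_trans; [apply reach_single, adj_sym, Hxy|].
      apply reach_sym; eapply reach_mono; eauto. }
  destruct (subtree_exists S (length T') T' (le_n _)) as [T [HT Hw]].
  - intros g Hg; unfold T' in Hg; apply in_app_or in Hg; destruct Hg as [Hg|[Hg|[]]].
    + apply Hok; subst TS; apply in_app_or in Hg; apply in_or_app; simpl; tauto.
    + subst g; simpl; auto.
  - intros p q Hp Hq; eapply reach_trans; [apply Hall; auto| apply reach_sym, Hall; auto].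
  - specialize (Hmin T HT). subst TS. unfold T' in Hw.
    rewrite !weight_app in *; simpl in *. unfold elen in Hw at 1; simpl in Hw. lra.
Qed.

Lemma Top_dist_sym p q : Defs.dist p q = Defs.dist q p.
Proof. unfold Defs.dist; f_equal; ring. Qed.

Lemma mst_star S TS f g : is_MST S TS -> In f TS -> In g TS -> f <> g ->
  elen f <= Defs.dist (snd f) (snd g) \/ elen f <= Defs.dist (fst f) (fst g).
Proof.
  intros HM Hf Hg Hfg.
  destruct (in_split f TS Hf) as [E1 [E2 HTS]].
  pose proof HM as [[Hok [Hcon Hac]] _].
  assert (HgR : In g (E1 ++ E2)).
  { subst TS; apply in_app_or in Hg; apply in_or_app; simpl in Hg; destruct Hg as [|[|]]; auto; congruence. }
  destruct (Hok g Hg) as [Hc [Hd _]]. destruct (Hok f Hf) as [Ha [Hb _]].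
  assert (Hcd : reach (E1++E2) (fst g) (snd g)) by (apply reach_single; left; destruct g; auto).
  destruct (split_reach E1 f E2 (fst g)) as [H1|H1].
  - rewrite <- HTS; apply Hcon; auto.
  - left. rewrite Top_dist_sym. eapply mst_cut; eauto. eapply reach_trans; eauto. apply reach_refl.
  - right. eapply mst_cut; eauto. apply reach_refl.
Qed.

Definition nrm (x y : R) := sqrt (x^2 + y^2).

Lemma nrm_pos x y : 0 <= nrm x y.
Proof. apply sqrt_pos. Qed.

Lemma nrm_sq x y : (nrm x y)^2 = x^2 + y^2.
Proof. unfold nrm. rewrite pow2_sqrt; [auto| nra]. Qed.

Lemma nrm_le x y k : 0 <= k -> x^2 + y^2 <= k^2 -> nrm x y <= k.
Proof.
  intros Hk H. unfold nrm. rewrite <- (sqrt_pow2 k Hk). apply sqrt_le_1_alt; auto.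
Qed.

Lemma nrm_tri x1 y1 x2 y2 : nrm (x1 + x2) (y1 + y2) <= nrm x1 y1 + nrm x2 y2.
Proof.
  pose proof (nrm_pos x1 y1); pose proof (nrm_pos x2 y2).
  pose proof (nrm_sq x1 y1); pose proof (nrm_sq x2 y2).
  set (A := nrm x1 y1) in *; set (B := nrm x2 y2) in *.
  apply nrm_le; [lra|].
  assert (x1*x2 + y1*y2 <= A*B).
  { destruct (Rle_or_lt (x1*x2+y1*y2) (A*B)) as [h|h]; auto.
    assert (0 <= A*B) by nra.
    assert ((A*B)^2 < (x1*x2+y1*y2)^2).
    { assert (0 < (x1*x2+y1*y2 - A*B) * (x1*x2+y1*y2 + A*B)) by (apply Rmult_lt_0_compat; lra).
      assert ((x1*x2+y1*y2 - A*B) * (x1*x2+y1*y2 + A*B) = (x1*x2+y1*y2)^2 - (A*B)^2) by ring.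
      lra. }
    assert ((A*B)^2 = (x1^2+y1^2)*(x2^2+y2^2)) by (rewrite <- H1, <- H2; ring).
    assert (0 <= (x1*y2 - x2*y1)^2) by apply pow2_ge_0.
    assert ((x1^2+y1^2)*(x2^2+y2^2) = (x1*x2+y1*y2)^2 + (x1*y2 - x2*y1)^2) by ring.
    lra. }
  assert ((A+B)^2 = A^2 + B^2 + 2*(A*B)) by ring.
  assert ((x1+x2)^2 + (y1+y2)^2 = (x1^2+y1^2) + (x2^2+y2^2) + 2*(x1*x2+y1*y2)) by ring.
  lra.
Qed.

Lemma nrm_scal k x y : nrm (k*x) (k*y) <= Rabs k * nrm x y.
Proof.
  apply nrm_le. apply Rmult_le_pos; [apply Rabs_pos|apply nrm_pos].
  pose proof (nrm_sq x y). pose proof (pow2_abs k).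
  assert ((Rabs k * nrm x y)^2 = (Rabs k)^2 * (nrm x y)^2) by ring.
  rewrite H1, H, H0. right; ring.
Qed.

Lemma nrm_abs x y : nrm x y <= Rabs x + Rabs y.
Proof.
  apply nrm_le. pose proof (Rabs_pos x); pose proof (Rabs_pos y); lra.
  rewrite <- (pow2_abs x), <- (pow2_abs y). pose proof (Rabs_pos x); pose proof (Rabs_pos y). nra.
Qed.

Lemma nrm_neg x y : nrm (-x) (-y) = nrm x y.
Proof. unfold nrm; f_equal; ring. Qed.

Lemma core px py ux uy vx vy a g E :
  nrm px py <= E -> nrm ux uy <= 1 -> nrm vx vy <= 1 -> nrm (vx - ux) (vy - uy) <= /8 ->
  0 <= a -> 0 <= g ->
  nrm (px - a*ux + g*vx) (py - a*uy + g*vy) <= E + Rabs (a - g) + Rmin a g / 8.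
Proof.
  intros Hp Hu Hv Huv Ha Hg.
  destruct (Rle_or_lt a g) as [h|h].
  - replace (px - a*ux + g*vx) with (px + ((g-a)*vx + a*(vx-ux))) by ring.
    replace (py - a*uy + g*vy) with (py + ((g-a)*vy + a*(vy-uy))) by ring.
    eapply Rle_trans; [apply nrm_tri|].
    eapply Rle_trans; [apply Rplus_le_compat_l, nrm_tri|].
    pose proof (nrm_scal (g-a) vx vy). pose proof (nrm_scal a (vx-ux) (vy-uy)).
    rewrite Rabs_left1 by lra. rewrite Rmin_left by lra.
    rewrite Rabs_right in H by lra. rewrite Rabs_right in H0 by lra.
    nra.
  - replace (px - a*ux + g*vx) with (px + ((g-a)*ux + g*(vx-ux))) by ring.
    replace (py - a*uy + g*vy) with (py + ((g-a)*uy + g*(vy-uy))) by ring.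
    eapply Rle_trans; [apply nrm_tri|].
    eapply Rle_trans; [apply Rplus_le_compat_l, nrm_tri|].
    pose proof (nrm_scal (g-a) ux uy). pose proof (nrm_scal g (vx-ux) (vy-uy)).
    rewrite Rabs_right by lra. rewrite Rmin_right by lra.
    rewrite Rabs_left in H by lra. rewrite Rabs_right in H0 by lra.
    nra.
Qed.

Definition typ (ty : Z) (l a b : R) : Prop :=
  (ty = 0%Z /\ l/4 <= a /\ l/4 <= b) \/ (ty = 1%Z /\ a < l/4) \/ (ty = 2%Z /\ b < l/4).

Lemma arith l a b g d D1 D2 ty :
  0 < l -> 0 <= a -> 0 <= b -> 0 <= g -> 0 <= d -> l <= a+b -> l <= g+d ->
  typ ty l a b -> typ ty l g d ->
  D1 <= l/16 + Rabs (a-g) + Rmin a g/8 ->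
  D2 <= l/16 + Rabs (d-b) + Rmin d b/8 ->
  (g+d <= a+b -> D1 < a+b /\ D2 < a+b) /\ (a+b <= g+d -> D1 < g+d /\ D2 < g+d).
Proof.
  intros. unfold typ in *.
  unfold Rabs, Rmin in *.
  destruct (Rcase_abs (a-g)); destruct (Rcase_abs (d-b));
  destruct (Rle_dec a g); destruct (Rle_dec d b);
  destruct H6 as [[? [? ?]]|[[? ?]|[? ?]]]; destruct H7 as [[? [? ?]]|[[? ?]|[? ?]]];
  subst; try discriminate; split; intros; split; lra.
Qed.

Lemma up_range r : 0 <= r <= 32 -> (1 <= up r <= 33)%Z.
Proof.
  intros H; destruct (archimed r) as [H1 H2]. split.
  - apply lt_IZR in H1 || idtac. assert (0 < IZR (up r)) by lra.
    apply lt_IZR in H0. lia.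
  - assert (IZR (up r) <= 33) by lra. apply le_IZR in H0. lia.
Qed.

Lemma up_close r1 r2 : up r1 = up r2 -> -1 < r1 - r2 < 1.
Proof.
  intros E; destruct (archimed r1); destruct (archimed r2). rewrite E in *. lra.
Qed.

Lemma sq_le1 x : x^2 <= 1 -> -1 <= x <= 1.
Proof. intros; split; nra. Qed.

Lemma sq0 x : x^2 = 0 -> x = 0.
Proof. intros; destruct (Req_dec x 0); auto; exfalso; apply (pow_nonzero x 2); auto. Qed.

Lemma pos_len (a b : point) : a <> b -> 0 < Defs.dist a b.
Proof.
  intros H. destruct a as [ax ay]; destruct b as [bx by0].
  pose proof (sqrt_pos ((ax - bx)^2 + (ay-by0)^2)).
  unfold Defs.dist; simpl.
  destruct H0 as [h|h]; auto. exfalso. symmetry in h.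
  pose proof (pow2_ge_0 (ax-bx)); pose proof (pow2_ge_0 (ay-by0)).
  apply sqrt_eq_0 in h; [|lra].
  apply H. assert ((ax-bx)^2 = 0) by lra. assert ((ay-by0)^2 = 0) by lra.
  apply sq0 in H2; apply sq0 in H3. f_equal; lra.
Qed.

Lemma unit_nrm ax ay bx by0 : (ax,ay) <> (bx,by0) ->
  let L := Defs.dist (ax,ay) (bx,by0) in
  nrm ((bx-ax)/L) ((by0-ay)/L) <= 1 /\ -1 <= (bx-ax)/L <= 1 /\ -1 <= (by0-ay)/L <= 1.
Proof.
  intros H L. pose proof (pos_len _ _ H) as HL. fold L in HL.
  pose proof (nrm_sq (ax-bx) (ay-by0)) as Hs.
  change (nrm (ax-bx) (ay-by0)) with L in Hs.
  assert (E : ((bx-ax)/L)^2 + ((by0-ay)/L)^2 = 1).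
  { assert (L <> 0) by lra.
    replace (((bx-ax)/L)^2 + ((by0-ay)/L)^2) with (((ax-bx)^2 + (ay-by0)^2)/L^2) by (field; auto).
    rewrite <- Hs. field; auto. }
  split; [apply nrm_le; [lra| rewrite E; simpl; lra]|].
  pose proof (pow2_ge_0 ((bx-ax)/L)); pose proof (pow2_ge_0 ((by0-ay)/L)).
  split; apply sq_le1; lra.
Qed.

Definition bk (r : R) : Z := up (16 * (r + 1)).
Definition bs (r : R) : Z := up (16 * r).
Definition enc (ty a b c : Z) : Z := (ty + 3 * (a + 34 * (b + 34 * c)))%Z.

Definition cellrel (e f : edge) (k : Z) : Prop :=
  exists s t ty,
    0 <= s <= 1 /\ 0 <= t <= 1 /\
    fst (fst e) + s * (fst (snd e) - fst (fst e)) = fst (fst f) + t * (fst (snd f) - fst (fst f)) /\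
    snd (fst e) + s * (snd (snd e) - snd (fst e)) = snd (fst f) + t * (snd (snd f) - snd (fst f)) /\
    typ ty (elen e) (t * elen f) ((1-t) * elen f) /\
    k = enc ty (bk ((fst (snd f) - fst (fst f)) / elen f)) (bk ((snd (snd f) - snd (fst f)) / elen f)) (bs s).

Lemma cell_exists (e f : edge) : fst f <> snd f -> 0 < elen e -> crosses e f ->
  exists k, (0 <= k < 117912)%Z /\ cellrel e f k.
Proof.
  intros Hne Hl [s [t [Hs [Ht [E1 E2]]]]].
  destruct f as [[ax ay] [bx by0]]. simpl in *.
  pose proof (unit_nrm ax ay bx by0 Hne) as HU. cbv zeta in HU. destruct HU as [_ [Hux Huy]].
  change (elen ((ax,ay),(bx,by0))) with (Defs.dist (ax,ay) (bx,by0)).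
  set (L := Defs.dist (ax,ay) (bx,by0)) in *.
  assert (HT : exists ty, typ ty (elen e) (t*L) ((1-t)*L)).
  { unfold typ. destruct (Rlt_dec (t*L) (elen e/4)). exists 1%Z; auto.
    destruct (Rlt_dec ((1-t)*L) (elen e/4)). exists 2%Z; auto.
    exists 0%Z; left; split; auto; lra. }
  destruct HT as [ty HT].
  assert (Hty : (0 <= ty <= 2)%Z) by (unfold typ in HT; destruct HT as [[-> _]|[[-> _]|[-> _]]]; lia).
  assert (B1 : (1 <= bk ((bx - ax) / L) <= 33)%Z) by (apply up_range; lra).
  assert (B2 : (1 <= bk ((by0 - ay) / L) <= 33)%Z) by (apply up_range; lra).
  assert (B3 : (1 <= bs s <= 33)%Z) by (apply up_range; lra).
  exists (enc ty (bk ((bx - ax) / L)) (bk ((by0 - ay) / L)) (bs s)).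
  split; [unfold enc; lia|]. exists s, t, ty; repeat split; auto; lra.
Qed.

Lemma small_diff x y : -/16 < x - y < /16 -> Rabs (x - y) <= /16.
Proof. intros; apply Rabs_le; lra. Qed.

Lemma pair_bound p1x p1y p2x p2y ax ay bx by0 cx cy dx dy s t s' t' :
  (ax,ay) <> (bx,by0) -> (cx,cy) <> (dx,dy) ->
  p1x + s*(p2x-p1x) = ax + t*(bx-ax) ->
  p1y + s*(p2y-p1y) = ay + t*(by0-ay) ->
  p1x + s'*(p2x-p1x) = cx + t'*(dx-cx) ->
  p1y + s'*(p2y-p1y) = cy + t'*(dy-cy) ->
  -/16 < s - s' < /16 ->
  -/16 < (bx-ax)/Defs.dist (ax,ay) (bx,by0) - (dx-cx)/Defs.dist (cx,cy) (dx,dy) < /16 ->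
  -/16 < (by0-ay)/Defs.dist (ax,ay) (bx,by0) - (dy-cy)/Defs.dist (cx,cy) (dx,dy) < /16 ->
  0 <= t <= 1 -> 0 <= t' <= 1 ->
  let Lf := Defs.dist (ax,ay) (bx,by0) in
  let Lg := Defs.dist (cx,cy) (dx,dy) in
  let l := Defs.dist (p1x,p1y) (p2x,p2y) in
  Defs.dist (ax,ay) (cx,cy) <= l/16 + Rabs (t*Lf - t'*Lg) + Rmin (t*Lf) (t'*Lg) / 8 /\
  Defs.dist (bx,by0) (dx,dy) <= l/16 + Rabs ((1-t')*Lg - (1-t)*Lf) + Rmin ((1-t')*Lg) ((1-t)*Lf) / 8.
Proof.
  intros Hf Hg E1 E2 E3 E4 Hs Hx Hy Ht Ht' Lf Lg l.
  pose proof (pos_len _ _ Hf) as HLf. pose proof (pos_len _ _ Hg) as HLg.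
  fold Lf in HLf. fold Lg in HLg. fold Lf Lg in Hx, Hy.
  pose proof (unit_nrm ax ay bx by0 Hf) as HU. cbv zeta in HU. fold Lf in HU.
  pose proof (unit_nrm cx cy dx dy Hg) as HV. cbv zeta in HV. fold Lg in HV.
  destruct HU as [HU _]; destruct HV as [HV _].
  set (ux := (bx-ax)/Lf) in *. set (uy := (by0-ay)/Lf) in *.
  set (vx := (dx-cx)/Lg) in *. set (vy := (dy-cy)/Lg) in *.
  assert (F1 : t*Lf*ux = t*(bx-ax)) by (unfold ux; field; lra).
  assert (F2 : t*Lf*uy = t*(by0-ay)) by (unfold uy; field; lra).
  assert (F3 : t'*Lg*vx = t'*(dx-cx)) by (unfold vx; field; lra).
  assert (F4 : t'*Lg*vy = t'*(dy-cy)) by (unfold vy; field; lra).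
  assert (G1 : Lf*ux = bx-ax) by (unfold ux; field; lra).
  assert (G2 : Lf*uy = by0-ay) by (unfold uy; field; lra).
  assert (G3 : Lg*vx = dx-cx) by (unfold vx; field; lra).
  assert (G4 : Lg*vy = dy-cy) by (unfold vy; field; lra).
  assert (Hp : nrm ((s-s')*(p2x-p1x)) ((s-s')*(p2y-p1y)) <= l/16).
  { eapply Rle_trans; [apply nrm_scal|].
    assert (nrm (p2x-p1x) (p2y-p1y) = l) by (unfold nrm, l, Defs.dist; simpl; f_equal; ring).
    rewrite H. pose proof (small_diff _ _ Hs). pose proof (Rabs_pos (s-s')).
    assert (0 <= l) by (unfold l, Defs.dist; apply sqrt_pos).
    assert (Rabs (s-s') * l <= /16 * l) by (apply Rmult_le_compat_r; lra). lra. }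
  assert (Huv : nrm (vx-ux) (vy-uy) <= /8).
  { eapply Rle_trans; [apply nrm_abs|].
    assert (Rabs (vx-ux) <= /16) by (apply Rabs_le; lra).
    assert (Rabs (vy-uy) <= /16) by (apply Rabs_le; lra). lra. }
  assert (Hvu : nrm (ux-vx) (uy-vy) <= /8).
  { eapply Rle_trans; [apply nrm_abs|].
    assert (Rabs (ux-vx) <= /16) by (apply Rabs_le; lra).
    assert (Rabs (uy-vy) <= /16) by (apply Rabs_le; lra). lra. }
  split.
  - change (Defs.dist (ax,ay) (cx,cy)) with (nrm (ax-cx) (ay-cy)).
    replace (ax-cx) with ((s-s')*(p2x-p1x) - (t*Lf)*ux + (t'*Lg)*vx) by lra.
    replace (ay-cy) with ((s-s')*(p2y-p1y) - (t*Lf)*uy + (t'*Lg)*vy) by lra.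
    apply core; auto; apply Rmult_le_pos; lra.
  - change (Defs.dist (bx,by0) (dx,dy)) with (nrm (bx-dx) (by0-dy)).
    replace (bx-dx) with ((s-s')*(p2x-p1x) - ((1-t')*Lg)*vx + ((1-t)*Lf)*ux) by lra.
    replace (by0-dy) with ((s-s')*(p2y-p1y) - ((1-t')*Lg)*vy + ((1-t)*Lf)*uy) by lra.
    apply core; auto; apply Rmult_le_pos; lra.
Qed.

Lemma pigeon {A : Type} (L : list A) (Rc : A -> Z -> Prop) (N : Z) :
  (0 <= N)%Z -> NoDup L -> (forall f, In f L -> exists k, (0 <= k < N)%Z /\ Rc f k) ->
  (forall f g k, In f L -> In g L -> Rc f k -> Rc g k -> f = g) ->
  (Z.of_nat (length L) <= N)%Z.
Proof.
  intros HN Hnd Hex Hinj.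
  assert (Hc : forall f, exists k, In f L -> (0 <= k < N)%Z /\ Rc f k).
  { intros f. destruct (classic (In f L)) as [H|H].
    - destruct (Hex f H) as [k Hk]; exists k; auto.
    - exists 0%Z; tauto. }
  set (h := fun f => proj1_sig (constructive_indefinite_description _ (Hc f))).
  assert (Hh : forall f, In f L -> (0 <= h f < N)%Z /\ Rc f (h f)).
  { intros f Hf. unfold h. destruct (constructive_indefinite_description _ (Hc f)); simpl; auto. }
  assert (Hnd' : NoDup (map (fun f => Z.to_nat (h f)) L)).
  { apply NoDup_map_NoDup_ForallPairs; auto.
    intros x y Hx Hy E. destruct (Hh x Hx) as [Rx Cx]; destruct (Hh y Hy) as [Ry Cy].
    assert (h x = h y) by lia. rewrite H in Cx. eapply Hinj; eauto. }
  assert (Hincl : incl (map (fun f => Z.to_nat (h f)) L) (seq 0 (Z.to_nat N))).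
  { intros n Hn. apply in_map_iff in Hn. destruct Hn as [x [<- Hx]].
    destruct (Hh x Hx) as [Rx _]. apply in_seq. lia. }
  pose proof (NoDup_incl_length Hnd' Hincl). rewrite length_map, length_seq in H. lia.
Qed.

Lemma cell_inj S TS e f g k : is_MST S TS -> In f TS -> In g TS ->
  0 < elen e -> elen e <= elen f -> elen e <= elen g ->
  cellrel e f k -> cellrel e g k -> f = g.
Proof.
  intros HM Hf Hg Hl Hlf Hlg Cf Cg.
  destruct (classic (f = g)) as [|Hfg]; auto; exfalso.
  pose proof HM as [[Hok _] _].
  destruct (Hok f Hf) as [_ [_ Hnf]]. destruct (Hok g Hg) as [_ [_ Hng]].
  pose proof (mst_star S TS f g HM Hf Hg Hfg) as St1.
  assert (Hgf : g <> f) by auto.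
  pose proof (mst_star S TS g f HM Hg Hf Hgf) as St2.
  destruct Cf as [s [t [ty [Hs [Ht [E1 [E2 [Ty Ek]]]]]]]].
  destruct Cg as [s' [t' [ty' [Hs' [Ht' [E3 [E4 [Ty' Ek']]]]]]]].
  destruct e as [[p1x p1y] [p2x p2y]].
  destruct f as [[ax ay] [bx by0]]. destruct g as [[cx cy] [dx dy]].
  unfold elen in *; cbn [fst snd] in *.
  pose proof (unit_nrm ax ay bx by0 Hnf) as HU. cbv zeta in HU.
  pose proof (unit_nrm cx cy dx dy Hng) as HV. cbv zeta in HV.
  destruct HU as [_ [HUx HUy]]. destruct HV as [_ [HVx HVy]].
  set (Lf := Defs.dist (ax,ay) (bx,by0)) in *.
  set (Lg := Defs.dist (cx,cy) (dx,dy)) in *.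
  set (l := Defs.dist (p1x,p1y) (p2x,p2y)) in *.
  assert (B1 : (1 <= bk ((bx - ax) / Lf) <= 33)%Z) by (apply up_range; lra).
  assert (B2 : (1 <= bk ((by0 - ay) / Lf) <= 33)%Z) by (apply up_range; lra).
  assert (B3 : (1 <= bs s <= 33)%Z) by (apply up_range; lra).
  assert (B4 : (1 <= bk ((dx - cx) / Lg) <= 33)%Z) by (apply up_range; lra).
  assert (B5 : (1 <= bk ((dy - cy) / Lg) <= 33)%Z) by (apply up_range; lra).
  assert (B6 : (1 <= bs s' <= 33)%Z) by (apply up_range; lra).
  assert (Hty : (0 <= ty <= 2)%Z) by (unfold typ in Ty; destruct Ty as [[-> _]|[[-> _]|[-> _]]]; lia).
  assert (Hty' : (0 <= ty' <= 2)%Z) by (unfold typ in Ty'; destruct Ty' as [[-> _]|[[-> _]|[-> _]]]; lia).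
  rewrite Ek in Ek'. unfold enc in Ek'.
  assert (Q1 : bk ((bx - ax) / Lf) = bk ((dx - cx) / Lg)) by lia.
  assert (Q2 : bk ((by0 - ay) / Lf) = bk ((dy - cy) / Lg)) by lia.
  assert (Q3 : bs s = bs s') by lia.
  assert (Q4 : ty = ty') by lia. subst ty'.
  apply up_close in Q1. apply up_close in Q2. apply up_close in Q3.
  assert (Hpos : 0 < Lf) by (apply pos_len; auto).
  assert (Hpos' : 0 < Lg) by (apply pos_len; auto).
  assert (PB := pair_bound p1x p1y p2x p2y ax ay bx by0 cx cy dx dy s t s' t' Hnf Hng E1 E2 E3 E4).
  cbv zeta in PB. fold Lf Lg l in PB.
  destruct PB as [D1 D2]; try lra.
  destruct (arith l (t*Lf) ((1-t)*Lf) (t'*Lg) ((1-t')*Lg)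
     (Defs.dist (ax,ay) (cx,cy)) (Defs.dist (bx,by0) (dx,dy)) ty) as [A1 A2];
    try lra; try (apply Rmult_le_pos; lra); auto.
  rewrite (Top_dist_sym (dx,dy) (bx,by0)) in St2. rewrite (Top_dist_sym (cx,cy) (ax,ay)) in St2.
  destruct (Rle_or_lt Lg Lf) as [h|h].
  - destruct A1 as [A A']; [lra|]. lra.
  - destruct A2 as [A A']; [lra|]. lra.
Qed.

Theorem lemma2 :
  exists c : R, 0 < c /\
    forall (P S : list point),
      NoDup P -> NoDup S ->
      (forall x, In x P -> ~ In x S) ->
      generic (P ++ S) ->
      forall TP TS, is_MST P TP -> is_MST S TS ->
      forall e, In e TP ->
      forall L : list edge, NoDup L ->
        (forall f, In f L -> In f TS /\ elen e <= elen f /\ crosses e f) ->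
        INR (length L) <= c.
Proof.
  exists (IZR 117912). split; [apply IZR_lt; lia|].
  intros P S HP HS Hdisj Hgen TP TS HTP HTS e He L HL HLf.
  assert (Hl : 0 < elen e).
  { destruct HTP as [[Hok _] _]. destruct (Hok e He) as [_ [_ H]]. apply pos_len; auto. }
  assert (Hz : (Z.of_nat (length L) <= 117912)%Z).
  { apply (pigeon L (cellrel e)); [lia|auto| |].
    - intros f Hf. destruct (HLf f Hf) as [HfT [_ Hc]].
      destruct HTS as [[Hok _] _]. destruct (Hok f HfT) as [_ [_ Hn]].
      apply cell_exists; auto.
    - intros f g k Hf Hg Cf Cg. destruct (HLf f Hf) as [HfT [Hlf _]].
      destruct (HLf g Hg) as [HgT [Hlg _]].
      eapply cell_inj; eauto. }
  rewrite INR_IZR_INZ. apply IZR_le. exact Hz.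
Qed.
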